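(* For the unit-sum normalization, there is an absolute constant $C>0$ such that for every $n\ge1$ and every truthful-in-expectation mechanism $J$ on $n$ agents and $n$ items, $ar(J)\le C/\sqrt n$.
   Context: Agents $N=\{1,\dots,n\}$, items $M=\{1,\dots,n\}$, outcomes are bijections $\mu$ ($O$ the set of outcomes). Unit-sum valuation functions: injective $u_i:M\to\mathbb R_{\ge0}$ with $\sum_j u_i(j)=1$; $V$ the set of these, $V^n$ the set of profiles. A (randomized) mechanism $J$ maps each profile to a distribution over $O$; $J(\mathbf u)_i$ is agent $i$'s random item. $J$ is truthful-in-expectation if for all $i$, $\mathbf u=(u_i,u_{-i})\in V^n$, $\tilde u_i\in V$: $\mathbb E[u_i(J(u_i,u_{-i})_i)]\ge\mathbb E[u_i(J(\tilde u_i,u_{-i})_i)]$. $ar(J)=\inf_{\mathbf u\in V^n}\mathbb E[\sum_i u_i(J(\mathbf u)_i)]/\max_{\mu\in O}\sum_i u_i(\mu_i)$. *)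

(* Defs.v *)
From HB Require Import structures.
From mathcomp Require Import all_boot all_fingroup.
From Stdlib Require Import Reals.

Set Implicit Arguments.
Unset Strict Implicit.
Unset Printing Implicit Defensive.

Lemma Rplus_0l : left_id R0 Rplus. Proof. exact: Rplus_0_l. Qed.
Lemma Rplus_A : associative Rplus. Proof. by move=> x y z; rewrite Rplus_assoc. Qed.
HB.instance Definition _ := Monoid.isComLaw.Build R R0 Rplus Rplus_A Rplus_comm Rplus_0l.

Notation "\rsum_ ( i : t ) F" := (\big[Rplus/R0]_(i : t) F)
  (at level 41, F at level 41, i, t at level 50).
Notation "\rsum_ ( i < n ) F" := (\big[Rplus/R0]_(i < n) F)
  (at level 41, F at level 41, i, n at level 50).

Section Defs.
Variable n : nat.

(* agents N = items M = 'I_n; an outcome is a bijection mu : agents -> items *)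
Definition outcome := {perm 'I_n}.
Definition valuation := 'I_n -> R.
Definition profile := 'I_n -> valuation.

Definition unit_sum (u : valuation) : Prop :=
  injective u /\ (forall j, 0 <= u j)%R /\ \rsum_(j < n) u j = 1%R.

Definition valid_profile (p : profile) : Prop := forall i, unit_sum (p i).

Definition mechanism := profile -> outcome -> R.

Definition is_mechanism (J : mechanism) : Prop :=
  forall p, valid_profile p ->
    (forall mu, 0 <= J p mu)%R /\ \rsum_(mu : outcome) J p mu = 1%R.

Definition exp_util (J : mechanism) (p : profile) (i : 'I_n) (v : valuation) : R :=
  \rsum_(mu : outcome) (J p mu * v (mu i))%R.

Definition replace (p : profile) (i : 'I_n) (v : valuation) : profile :=
  fun k => if k == i then v else p k.

Definition truthful (J : mechanism) : Prop :=
  forall (p : profile) (i : 'I_n) (v : valuation),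
    valid_profile p -> unit_sum v ->
    (exp_util J (replace p i v) i (p i) <= exp_util J p i (p i))%R.

Definition sw (p : profile) (mu : outcome) : R := \rsum_(i < n) p i (mu i).

Definition exp_sw (J : mechanism) (p : profile) : R :=
  \rsum_(mu : outcome) (J p mu * sw p mu)%R.

Definition opt_sw (p : profile) : R := \big[Rmax/R0]_(mu : outcome) sw p mu.

(* ratio at a profile; ar(J) is the infimum of this over valid profiles *)
Definition ratio (J : mechanism) (p : profile) : R := (exp_sw J p / opt_sw p)%R.

End Defs.

(* Main.v *)
Require Import Defs.
From HB Require Import structures.
From mathcomp Require Import all_boot all_fingroup.
From Stdlib Require Import Reals.
From Stdlib Require Import Lra Psatz FunctionalExtensionality Classical.
From mathcomp Require Import zify.
Open Scope R_scope.

Lemma rsum_le (I : finType) (F G : I -> R) :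
  (forall i, F i <= G i) -> \big[Rplus/R0]_(i : I) F i <= \big[Rplus/R0]_(i : I) G i.
Proof. move=> H; apply: (big_ind2 (fun a b => a <= b)) => //; [lra| move=> *; lra]. Qed.

Lemma rsum_ge0 (I : finType) (F : I -> R) :
  (forall i, 0 <= F i) -> 0 <= \big[Rplus/R0]_(i : I) F i.
Proof. move=> H; apply: (big_ind (fun a => 0 <= a)) => //; [lra| move=> *; lra]. Qed.

Lemma rsum_scal (I : finType) (c : R) (F : I -> R) :
  \big[Rplus/R0]_(i : I) (c * F i) = c * \big[Rplus/R0]_(i : I) F i.
Proof. apply: (big_ind2 (fun a b => a = c * b)) => //; [ring| move=> ? ? ? ? -> ->; ring]. Qed.

Lemma rsum_scalr (I : finType) (c : R) (F : I -> R) :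
  \big[Rplus/R0]_(i : I) (F i * c) = \big[Rplus/R0]_(i : I) F i * c.
Proof. apply: (big_ind2 (fun a b => a = b * c)) => //; [ring| move=> ? ? ? ? -> ->; ring]. Qed.

Lemma rsum_split (I : finType) (F G : I -> R) :
  \big[Rplus/R0]_(i : I) (F i + G i) = \big[Rplus/R0]_(i : I) F i + \big[Rplus/R0]_(i : I) G i.
Proof. exact: big_split. Qed.

Lemma rsum_const (I : finType) (c : R) :
  \big[Rplus/R0]_(i : I) c = INR #|I| * c.
Proof.
rewrite big_const; elim: #|I| => [|m IH] /=; first (simpl; ring).
rewrite IH; rewrite -/(INR m.+1) S_INR; ring.
Qed.

Lemma rsum_pick (I : finType) (j : I) (F : I -> R) :
  \big[Rplus/R0]_(i : I) (if i == j then F i else 0) = F j.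
Proof.
rewrite (bigD1 j) //= eqxx big1 ?Rplus_0_r // => i /negbTE ->; done.
Qed.

Lemma rsum_pick' (I : finType) (j : I) (F : I -> R) :
  \big[Rplus/R0]_(i : I) (if j == i then F i else 0) = F j.
Proof.
rewrite -(@rsum_pick _ j F); apply: eq_bigr => i _; by rewrite eq_sym.
Qed.

Lemma rsum_ge_term (I : finType) (j : I) (F : I -> R) :
  (forall i, 0 <= F i) -> F j <= \big[Rplus/R0]_(i : I) F i.
Proof.
move=> H; rewrite (bigD1 j) //=.
have : 0 <= \big[Rplus/R0]_(i | i != j) F i.
  apply: (big_ind (fun a => 0 <= a)) => //; [lra| move=> *; lra].
lra.
Qed.

Lemma rsum_inj_le (I J : finType) (h : I -> J) (F : J -> R) :
  injective h -> (forall j, 0 <= F j) ->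
  \big[Rplus/R0]_(i : I) F (h i) <= \big[Rplus/R0]_(j : J) F j.
Proof.
move=> hi F0.
rewrite (bigID (fun j => j \in h @: [set: I])) /=.
have -> : \big[Rplus/R0]_(i | i \in h @: [set: I]) F i = \big[Rplus/R0]_(i : I) F (h i).
  rewrite big_imset /=; last by move=> x y _ _; apply: hi.
  by apply: eq_bigl => x; rewrite in_setT.
have : 0 <= \big[Rplus/R0]_(i | i \notin h @: [set: I]) F i.
  apply: (big_ind (fun a => 0 <= a)) => //; [lra| move=> *; lra].
lra.
Qed.

Lemma rsum_exists_le (I : finType) (F : I -> R) (B : R) (i0 : I) :
  \big[Rplus/R0]_(i : I) F i <= INR #|I| * B -> exists i, F i <= B.
Proof.
move=> H; apply: NNPP => Hn.
have Hl : forall i, B < F i by move=> i; apply: Rnot_le_lt => Hi; apply: Hn; exists i.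
have E : \big[Rplus/R0]_(i : I) F i = \big[Rplus/R0]_(i : I) (F i - B) + \big[Rplus/R0]_(i : I) B.
  rewrite -rsum_split; apply: eq_bigr => i _; ring.
have P : F i0 - B <= \big[Rplus/R0]_(i : I) (F i - B).
  apply: rsum_ge_term => i; have := Hl i; lra.
have := Hl i0; rewrite E rsum_const in H; lra.
Qed.

Set Implicit Arguments. Unset Strict Implicit.

Definition upd (I Jt : finType) (T : {ffun I -> Jt}) (g : I) (c : Jt) : {ffun I -> Jt} :=
  [ffun h => if h == g then c else T h].

Lemma upd_at (I Jt : finType) (T : {ffun I -> Jt}) g c : upd T g c g = c.
Proof. by rewrite /upd ffunE eqxx. Qed.

Lemma upd_upd (I Jt : finType) (T : {ffun I -> Jt}) g c c' : upd (upd T g c) g c' = upd T g c'.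
Proof. apply/ffunP => h; rewrite /upd !ffunE; by case: (h == g). Qed.

Lemma upd_id (I Jt : finType) (T : {ffun I -> Jt}) g : upd T g (T g) = T.
Proof. apply/ffunP => h; rewrite /upd !ffunE; by case: eqP => [->|]. Qed.

Lemma shift_sum (I Jt : finType) (g : I) (c c0 : Jt) (H : {ffun I -> Jt} -> R) :
  (forall T c', H (upd T g c') = H T) ->
  \big[Rplus/R0]_(T : {ffun I -> Jt}) (if T g == c then H T else 0) =
  \big[Rplus/R0]_(T : {ffun I -> Jt}) (if T g == c0 then H T else 0).
Proof.
move=> Hinv.
pose s T := upd T g (tperm c c0 (T g)).
have sK : involutive s.
  move=> T; rewrite /s upd_upd upd_at tpermK upd_id //.
rewrite (reindex_inj (inv_inj sK)) /=.
apply: eq_bigr => T _; rewrite /s upd_at Hinv.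
have -> : (tperm c c0 (T g) == c) = (T g == c0).
  by rewrite -(inj_eq (@perm_inj _ (tperm c c0)) (T g) c0) tpermR.
done.
Qed.

Lemma avg_lemma (I Jt : finType) (g : I) (c0 : Jt) (Y : {ffun I -> Jt} -> Jt -> R) :
  (forall T c c', Y (upd T g c') c = Y T c) ->
  (forall T, \big[Rplus/R0]_(c : Jt) Y T c <= 1) ->
  INR #|Jt| * \big[Rplus/R0]_(T : {ffun I -> Jt}) Y T (T g) <= INR #|{ffun I -> Jt}|.
Proof.
move=> Hinv Hle.
pose S0 := \big[Rplus/R0]_(T : {ffun I -> Jt}) (if T g == c0 then 1 else 0).
have E1 : \big[Rplus/R0]_(T : {ffun I -> Jt}) Y T (T g) =
   \big[Rplus/R0]_(c : Jt) \big[Rplus/R0]_(T : {ffun I -> Jt}) (if T g == c0 then Y T c else 0).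
  transitivity (\big[Rplus/R0]_(T : {ffun I -> Jt}) \big[Rplus/R0]_(c : Jt) (if T g == c then Y T c else 0)).
    by apply: eq_bigr => T _; rewrite rsum_pick'.
  rewrite exchange_big /=; apply: eq_bigr => c _.
  by apply: (@shift_sum _ _ g c c0 (fun T => Y T c)) => T c'; apply: Hinv.
have E2 : \big[Rplus/R0]_(c : Jt) \big[Rplus/R0]_(T : {ffun I -> Jt}) (if T g == c0 then Y T c else 0)
   <= S0.
  rewrite exchange_big /=; apply: rsum_le => T.
  by case: (T g == c0) => /=; [exact: Hle | rewrite big1 //; lra].
have E3 : INR #|{ffun I -> Jt}| = INR #|Jt| * S0.
  transitivity (\big[Rplus/R0]_(T : {ffun I -> Jt}) \big[Rplus/R0]_(c : Jt) (if T g == c then 1 else 0)).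
    rewrite -[LHS]Rmult_1_r -rsum_const; apply: eq_bigr => T _.
    by rewrite (@rsum_pick' _ (T g) (fun _ => 1)).
  rewrite exchange_big /=.
  transitivity (\big[Rplus/R0]_(c : Jt) S0); last by rewrite rsum_const.
  apply: eq_bigr => c _.
  by apply: (@shift_sum _ _ g c c0 (fun T => 1)).
rewrite E1 E3.
have : 0 <= INR #|Jt| by apply: pos_INR.
nra.
Qed.

Definition SS (N : nat) : R := INR N * (INR N + 1) / 2.
Definition dl (N : nat) (j : 'I_N) : R := (INR j + 1) / SS N.
Definition valf (N : nat) (a : 'I_N) (al : R) : valuation N :=
  fun j => (if j == a then al else 0) + (1 - al) * dl j.

Lemma sum_nat_R (m : nat) : \big[Rplus/R0]_(j < m) (INR j + 1) = INR m * (INR m + 1) / 2.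
Proof.
elim: m => [|m IH]; first by rewrite big_ord0 /=; field.
rewrite big_ord_recr /= IH -/(INR m.+1) S_INR; field.
Qed.

Lemma SS_pos (N : nat) : (0 < N)%nat -> 0 < SS N.
Proof.
move=> H; rewrite /SS; have : 0 < INR N by apply: lt_0_INR; apply/ltP.
move=> h; nra.
Qed.

Lemma sum_dl (N : nat) : (0 < N)%nat -> \big[Rplus/R0]_(j < N) dl j = 1.
Proof.
move=> H; rewrite /dl.
rewrite (@rsum_scalr _ (/ SS N) (fun j : 'I_N => INR j + 1)) sum_nat_R -/(SS N).
have := SS_pos H; move=> h; field; lra.
Qed.

Lemma dl_pos (N : nat) (j : 'I_N) : 0 < dl j.
Proof.
have H : (0 < N)%nat by case: j => m; case: N => //.
rewrite /dl; have := SS_pos H; have := pos_INR j => ? ?.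
apply: Rdiv_lt_0_compat; lra.
Qed.

Lemma dl_le (N : nat) (j : 'I_N) : dl j <= 2 / (INR N + 1).
Proof.
have H : (0 < N)%nat by case: j => m; case: N => //.
have Hj : INR j + 1 <= INR N.
  rewrite -S_INR; apply: le_INR; apply/leP; exact: ltn_ord.
have hN : 0 < INR N by apply: lt_0_INR; apply/ltP.
rewrite /dl /SS.
have -> : 2 / (INR N + 1) = INR N / (INR N * (INR N + 1) / 2) by field; lra.
apply: Rmult_le_compat_r; last lra.
apply: Rlt_le; apply: Rinv_0_lt_compat; nra.
Qed.

Lemma dl_inj (N : nat) (j1 j2 : 'I_N) : dl j1 = dl j2 -> j1 = j2.
Proof.
have H : (0 < N)%nat := leq_ltn_trans (leq0n _) (ltn_ord j1).
have := SS_pos H; rewrite /dl => hS E.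
have : INR j1 = INR j2.
  have e1 : INR j1 + 1 = (INR j1 + 1) / SS N * SS N by field; lra.
  have e2 : INR j2 + 1 = (INR j2 + 1) / SS N * SS N by field; lra.
  rewrite E in e1; lra.
by move/INR_eq => h; apply: val_inj.
Qed.

Lemma valf_unit (N : nat) (a : 'I_N) (al : R) :
  0 <= al < 1 -> (al = 0 \/ 2 * (1 - al) < al * (INR N + 1)) -> unit_sum (valf a al).
Proof.
move=> [h0 h1] hal.
have HN : (0 < N)%nat := leq_ltn_trans (leq0n _) (ltn_ord a).
split; last split.
- move=> j1 j2; rewrite /valf.
  have hNp : 0 < INR N + 1 by have := pos_INR N; lra.
  have key : forall j, j != a -> al + (1 - al) * dl a <> (1 - al) * dl j.
    move=> j ja E.
    case: hal => [z|hb].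
    + subst al; move/eqP: ja; apply; apply: dl_inj; lra.
    + have p2 := dl_le j; have p1 := dl_pos a.
      have q : (1 - al) * dl j <= (1 - al) * (2 / (INR N + 1)) by apply: Rmult_le_compat_l; lra.
      have q2 : (1 - al) * (2 / (INR N + 1)) * (INR N + 1) = 2 * (1 - al) by field; lra.
      have q3 : 0 < (1-al) * dl a by apply: Rmult_lt_0_compat; lra.
      nra.
  case: (eqVneq j1 a) => [->|n1]; case: (eqVneq j2 a) => [->|n2] //.
  + move=> E; exfalso; apply: (key j2 n2); lra.
  + move=> E; exfalso; apply: (key j1 n1); lra.
  + move=> E; apply: dl_inj.
    apply: (Rmult_eq_reg_l (1 - al)); lra.
- move=> j; rewrite /valf; have := dl_pos j; case: (j == a); nra.
- rewrite /valf rsum_split (@rsum_pick _ a (fun _ => al)).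
  rewrite (@rsum_scal _ (1 - al) (@dl N)) sum_dl //; ring.
Qed.

Lemma valf_le (N : nat) (a : 'I_N) (al : R) (j : 'I_N) :
  0 <= al <= 1 -> valf a al j <= (if j == a then al else 0) + 2 / (INR N + 1).
Proof.
move=> h; rewrite /valf; have := dl_le j; have := dl_pos j; move=> p q.
have : (1 - al) * dl j <= dl j by nra.
lra.
Qed.

Lemma valf_ge (N : nat) (a : 'I_N) (al : R) (j : 'I_N) :
  0 <= al <= 1 -> (if j == a then al else 0) <= valf a al j.
Proof.
move=> h; rewrite /valf; have := dl_pos j => p.
have : 0 <= (1 - al) * dl j by nra.
lra.
Qed.

Definition xprob (N : nat) (J : mechanism N) (p : profile N) (i a : 'I_N) : R :=
  \big[Rplus/R0]_(mu : outcome N) (J p mu * (if mu i == a then 1 else 0)).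

Lemma xprob_ge0 (N : nat) (J : mechanism N) p i a :
  is_mechanism J -> valid_profile p -> 0 <= xprob J p i a.
Proof.
move=> HJ Hp; apply: rsum_ge0 => mu; have [h _] := HJ p Hp; have := h mu.
case: (mu i == a); nra.
Qed.

Lemma sum_xprob_agents (N : nat) (J : mechanism N) p a :
  is_mechanism J -> valid_profile p -> \big[Rplus/R0]_(i : 'I_N) xprob J p i a = 1.
Proof.
move=> HJ Hp; rewrite /xprob exchange_big /=.
have [_ h] := HJ p Hp; rewrite -[RHS]h; apply: eq_bigr => mu _.
rewrite rsum_scal.
have -> : \big[Rplus/R0]_(i : 'I_N) (if mu i == a then 1 else 0) = 1.
  transitivity (\big[Rplus/R0]_(i : 'I_N) (if i == (mu^-1)%g a then 1 else 0)).
    apply: eq_bigr => i _.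
    by rewrite -(inj_eq (@perm_inj _ mu) i) permKV.
  by rewrite (@rsum_pick _ _ (fun _ => 1)).
ring.
Qed.

Lemma exp_util_le (N : nat) (J : mechanism N) p i a al :
  is_mechanism J -> valid_profile p -> 0 <= al <= 1 ->
  exp_util J p i (valf a al) <= al * xprob J p i a + 2 / (INR N + 1).
Proof.
move=> HJ Hp hal; have [h0 h1] := HJ p Hp.
rewrite /exp_util /xprob.
apply: (Rle_trans _ (\big[Rplus/R0]_(mu : outcome N)
   (al * (J p mu * (if mu i == a then 1 else 0)) + J p mu * (2 / (INR N + 1))))).
  apply: rsum_le => mu; have := h0 mu; have := valf_le a (mu i) hal.
  case: (mu i == a) => /= q r; nra.
right; rewrite rsum_split rsum_scal rsum_scalr h1 Rmult_1_l; reflexivity.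
Qed.

Lemma exp_util_ge (N : nat) (J : mechanism N) p i a al :
  is_mechanism J -> valid_profile p -> 0 <= al <= 1 ->
  al * xprob J p i a <= exp_util J p i (valf a al).
Proof.
move=> HJ Hp hal; have [h0 h1] := HJ p Hp.
rewrite /exp_util /xprob -rsum_scal.
apply: rsum_le => mu; have := h0 mu; have := valf_ge a (mu i) hal.
case: (mu i == a) => /= q r; nra.
Qed.

Lemma exp_sw_eq (N : nat) (J : mechanism N) p :
  exp_sw J p = \big[Rplus/R0]_(i : 'I_N) exp_util J p i (p i).
Proof.
rewrite /exp_sw /exp_util exchange_big /=; apply: eq_bigr => mu _.
by rewrite /sw -rsum_scal.
Qed.

Lemma opt_ge (N : nat) (p : profile N) mu : sw p mu <= opt_sw p.
Proof.
rewrite /opt_sw unlock /reducebig.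
have : mu \in index_enum (outcome N) by rewrite mem_index_enum.
elim: (index_enum _) => //= x s IH.
rewrite in_cons => /orP [/eqP ->|/IH h].
- rewrite /= ; apply: Rmax_l.
- apply: (Rle_trans _ _ _ h); apply: Rmax_r.
Qed.

Definition isg (N' K' : nat) (i : 'I_N'.+1) : bool :=
  ((K'.+1 <= i) && (i < K'.+1 + K'.+1 * K'.+1))%nat.
Definition gi (N' K' : nat) (i : 'I_N'.+1) : 'I_K'.+1 := inord ((i - K'.+1) %/ K'.+1).
Definition ci (N' K' : nat) (i : 'I_N'.+1) : 'I_K'.+1 := inord ((i - K'.+1) %% K'.+1).
Definition pos (N' K' : nat) (g c : 'I_K'.+1) : 'I_N'.+1 := inord (K'.+1 + g * K'.+1 + c).
Definition item (N' K' : nat) (g : 'I_K'.+1) : 'I_N'.+1 := inord g.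

Lemma pos_val N' K' (g c : 'I_K'.+1) : (K'.+1 + K'.+1 * K'.+1 <= N'.+1)%nat ->
  nat_of_ord (@pos N' K' g c) = (K'.+1 + g * K'.+1 + c)%nat.
Proof.
move=> hK; rewrite /pos inordK //.
have := ltn_ord g; have := ltn_ord c => h1 h2.
have : (g * K'.+1 <= K' * K'.+1)%nat by rewrite leq_mul2r; apply/orP; right; rewrite -ltnS.
nia.
Qed.

Lemma item_val N' K' (g : 'I_K'.+1) : (K'.+1 + K'.+1 * K'.+1 <= N'.+1)%nat ->
  nat_of_ord (@item N' K' g) = g.
Proof. move=> hK; rewrite /item inordK //; have := ltn_ord g; lia. Qed.

Lemma isg_pos N' K' (g c : 'I_K'.+1) : (K'.+1 + K'.+1 * K'.+1 <= N'.+1)%nat -> @isg N' K' (@pos N' K' g c).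
Proof.
move=> hK; rewrite /isg pos_val //.
have := ltn_ord g; have := ltn_ord c => h1 h2.
have : (g * K'.+1 <= K' * K'.+1)%nat by rewrite leq_mul2r; apply/orP; right; rewrite -ltnS.
move=> h3; apply/andP; split; nia.
Qed.

Lemma gi_pos N' K' (g c : 'I_K'.+1) : (K'.+1 + K'.+1 * K'.+1 <= N'.+1)%nat -> @gi N' K' (@pos N' K' g c) = g.
Proof.
move=> hK; apply: val_inj; rewrite /gi pos_val //=.
have -> : (K'.+1 + g * K'.+1 + c - K'.+1 = g * K'.+1 + c)%nat by lia.
rewrite divnMDl // divn_small // addn0 inordK //.
Qed.

Lemma ci_pos N' K' (g c : 'I_K'.+1) : (K'.+1 + K'.+1 * K'.+1 <= N'.+1)%nat -> @ci N' K' (@pos N' K' g c) = c.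
Proof.
move=> hK; apply: val_inj; rewrite /ci pos_val //=.
have -> : (K'.+1 + g * K'.+1 + c - K'.+1 = g * K'.+1 + c)%nat by lia.
rewrite modnMDl modn_small // inordK //.
Qed.

Lemma pos_gc N' K' (i : 'I_N'.+1) : (K'.+1 + K'.+1 * K'.+1 <= N'.+1)%nat ->
  @isg N' K' i -> @pos N' K' (@gi N' K' i) (@ci N' K' i) = i.
Proof.
move=> hK /andP [h1 h2]; apply: val_inj => /=; rewrite pos_val // /gi /ci.
have hd : ((i - K'.+1) %/ K'.+1 < K'.+1)%nat by rewrite ltn_divLR //; lia.
rewrite !inordK //; last by rewrite ltn_mod.
have := divn_eq (i - K'.+1) K'.+1; lia.
Qed.

Lemma pos_inj N' K' : (K'.+1 + K'.+1 * K'.+1 <= N'.+1)%nat ->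
  forall g1 c1 g2 c2 : 'I_K'.+1, @pos N' K' g1 c1 = @pos N' K' g2 c2 -> g1 = g2 /\ c1 = c2.
Proof.
move=> hK g1 c1 g2 c2 E; split.
- by rewrite -(gi_pos g1 c1 hK) E gi_pos.
- by rewrite -(ci_pos g1 c1 hK) E ci_pos.
Qed.

Arguments isg : clear implicits.
Arguments gi : clear implicits.
Arguments ci : clear implicits.
Arguments pos : clear implicits.
Arguments item : clear implicits.

Definition vv (K' : nat) : R := / INR K'.+2.
Definition Hg (N' K' : nat) (g : 'I_K'.+1) : valuation N'.+1 := valf (item N' K' g) (/2).
Definition Mg (N' K' : nat) (g : 'I_K'.+1) : valuation N'.+1 := valf (item N' K' g) (vv K').
Definition Fl (N' : nat) : valuation N'.+1 := valf ord0 0.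
Arguments Hg : clear implicits.
Arguments Mg : clear implicits.
Arguments Fl : clear implicits.

Definition prof (N' K' : nat) (T : {ffun 'I_K'.+1 -> 'I_K'.+1}) : profile N'.+1 :=
  fun i => if isg N' K' i then
     (if ci N' K' i == T (gi N' K' i) then Hg N' K' (gi N' K' i) else Mg N' K' (gi N' K' i))
   else Fl N'.

Definition qprof (N' K' : nat) (T : {ffun 'I_K'.+1 -> 'I_K'.+1}) (g : 'I_K'.+1) : profile N'.+1 :=
  fun i => if isg N' K' i then
     (if (gi N' K' i != g) && (ci N' K' i == T (gi N' K' i)) then Hg N' K' (gi N' K' i)
      else Mg N' K' (gi N' K' i))
   else Fl N'.

Arguments prof : clear implicits.
Arguments qprof : clear implicits.
Definition HypK (N' K' : nat) := (K'.+1 + K'.+1 * K'.+1 <= N'.+1)%nat.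

Lemma INR_N_ge N' K' : HypK N' K' -> INR K'.+1 + INR K'.+1 * INR K'.+1 <= INR N'.+1.
Proof.
move=> h; rewrite -mult_INR -plus_INR; apply: le_INR; apply/leP; move: h; rewrite /HypK; lia.
Qed.

Lemma Hg_unit N' K' g : HypK N' K' -> unit_sum (Hg N' K' g).
Proof.
move=> h; apply: valf_unit; first lra.
right; have := INR_N_ge h; have := pos_INR K'.+1; have : 1 <= INR K'.+1.
  by apply: (le_INR 1); apply/leP.
nra.
Qed.

Lemma vv_bounds K' : 0 < vv K' < 1.
Proof.
rewrite /vv; have h : 2 <= INR K'.+2 by apply: (le_INR 2); apply/leP.
split; first (apply: Rinv_0_lt_compat; lra).
rewrite -Rinv_1; apply: Rinv_lt_contravar; lra.
Qed.

Lemma Mg_unit N' K' g : HypK N' K' -> unit_sum (Mg N' K' g).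
Proof.
move=> h; have hv := vv_bounds K'; apply: valf_unit; first lra.
right; have := INR_N_ge h; have : 1 <= INR K'.+1.
  by apply: (le_INR 1); apply/leP.
have -> : vv K' = / (INR K'.+1 + 1) by rewrite /vv -/(INR K'.+2) S_INR.
move=> h1 h2.
have hp : 0 < INR K'.+1 + 1 by lra.
apply: (Rmult_lt_reg_r (INR K'.+1 + 1)) => //.
have -> : / (INR K'.+1 + 1) * (INR N'.+1 + 1) * (INR K'.+1 + 1) = INR N'.+1 + 1 by field; lra.
have -> : 2 * (1 - / (INR K'.+1 + 1)) * (INR K'.+1 + 1) = 2 * INR K'.+1 by field; lra.
nra.
Qed.

Lemma Fl_unit N' : unit_sum (Fl N').
Proof. apply: valf_unit; [lra | by left]. Qed.

Lemma prof_valid N' K' T : HypK N' K' -> valid_profile (prof N' K' T).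
Proof.
move=> h i; rewrite /prof; case: (isg _ _ i); last exact: Fl_unit.
case: (_ == _); [exact: Hg_unit | exact: Mg_unit].
Qed.

Lemma qprof_valid N' K' T g : HypK N' K' -> valid_profile (qprof N' K' T g).
Proof.
move=> h i; rewrite /qprof; case: (isg _ _ i); last exact: Fl_unit.
case: (_ && _); [exact: Hg_unit | exact: Mg_unit].
Qed.

Lemma chosen_eq N' K' T (i : 'I_N'.+1) : HypK N' K' -> isg N' K' i ->
  (ci N' K' i == T (gi N' K' i)) = (i == pos N' K' (gi N' K' i) (T (gi N' K' i))).
Proof.
move=> h hi; apply/idP/idP => /eqP E; apply/eqP.
- by rewrite -E (pos_gc h hi).
- by have := ci_pos (gi N' K' i) (T (gi N' K' i)) h; rewrite -E.
Qed.

Lemma replace_prof N' K' T g : HypK N' K' ->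
  replace (prof N' K' T) (pos N' K' g (T g)) (Mg N' K' g) = qprof N' K' T g.
Proof.
move=> h; apply: functional_extensionality => i; rewrite /replace /prof /qprof.
case: (eqVneq i (pos N' K' g (T g))) => [->|ne].
  by rewrite isg_pos // gi_pos // ci_pos // eqxx.
case hi: (isg N' K' i) => //.
case: (eqVneq (gi N' K' i) g) => [eg|ng] /=.
- rewrite chosen_eq // eg (negbTE ne) //.
- done.
Qed.

Lemma replace_qprof N' K' T g : HypK N' K' ->
  replace (qprof N' K' T g) (pos N' K' g (T g)) (Hg N' K' g) = prof N' K' T.
Proof.
move=> h; apply: functional_extensionality => i; rewrite /replace /prof /qprof.
case: (eqVneq i (pos N' K' g (T g))) => [->|ne].
  by rewrite isg_pos // gi_pos // ci_pos // eqxx.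
case hi: (isg N' K' i) => //.
case: (eqVneq (gi N' K' i) g) => [eg|ng] /=.
- rewrite chosen_eq // eg (negbTE ne) //.
- done.
Qed.

Lemma qprof_upd N' K' T g c : qprof N' K' (upd T g c) g = qprof N' K' T g.
Proof.
apply: functional_extensionality => i; rewrite /qprof.
case: (isg N' K' i) => //.
case: (eqVneq (gi N' K' i) g) => [eg|ng] //=.
by rewrite /upd ffunE (negbTE ng).
Qed.

Lemma qprof_at N' K' T g : HypK N' K' -> qprof N' K' T g (pos N' K' g (T g)) = Mg N' K' g.
Proof. by move=> h; rewrite /qprof isg_pos // gi_pos // eqxx. Qed.

Definition eps' (N' K' : nat) : R := (2 / (INR N'.+1 + 1)) / vv K'.

Lemma truth_step N' K' (J : mechanism N'.+1) T g :
  is_mechanism J -> truthful J -> HypK N' K' ->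
  xprob J (prof N' K' T) (pos N' K' g (T g)) (item N' K' g) <=
  xprob J (qprof N' K' T g) (pos N' K' g (T g)) (item N' K' g) + eps' N' K'.
Proof.
move=> HJ HT h.
have tr := HT (qprof N' K' T g) (pos N' K' g (T g)) (Hg N' K' g) (qprof_valid T g h) (Hg_unit g h).
rewrite replace_qprof // qprof_at // /Mg in tr.
have hv := vv_bounds K'.
have hv' : 0 <= vv K' <= 1 by lra.
have lo := exp_util_ge (pos N' K' g (T g)) (item N' K' g) HJ (prof_valid T h) hv'.
have hi := exp_util_le (pos N' K' g (T g)) (item N' K' g) HJ (qprof_valid T g h) hv'.
rewrite /eps'.
set X := xprob _ _ _ _ in lo *.
set Y := xprob _ _ _ _ in hi *.
have : vv K' * X <= vv K' * Y + 2 / (INR N'.+1 + 1) by lra.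
move=> q.
apply: (Rmult_le_reg_l (vv K')); first lra.
set cc := 2 / (INR N'.+1 + 1) in q *.
have -> : vv K' * (Y + cc / vv K') = vv K' * Y + cc by field; lra.
exact: q.
Qed.

Lemma sumY_le1 N' K' (J : mechanism N'.+1) T g :
  is_mechanism J -> HypK N' K' ->
  \big[Rplus/R0]_(c : 'I_K'.+1) xprob J (qprof N' K' T g) (pos N' K' g c) (item N' K' g) <= 1.
Proof.
move=> HJ h.
rewrite -(sum_xprob_agents (item N' K' g) HJ (qprof_valid T g h)).
apply: (@rsum_inj_le _ _ (pos N' K' g) (fun i => xprob J (qprof N' K' T g) i (item N' K' g))).
- by move=> c1 c2 /(pos_inj h) [].
- move=> i; exact: xprob_ge0 HJ (qprof_valid T g h).
Qed.

Lemma avg_X N' K' (J : mechanism N'.+1) :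
  is_mechanism J -> truthful J -> HypK N' K' ->
  exists T : {ffun 'I_K'.+1 -> 'I_K'.+1},
    \big[Rplus/R0]_(g : 'I_K'.+1) xprob J (prof N' K' T) (pos N' K' g (T g)) (item N' K' g)
      <= 1 + INR K'.+1 * eps' N' K'.
Proof.
move=> HJ HT h.
set NT := INR #|{ffun 'I_K'.+1 -> 'I_K'.+1}|.
have hK : 0 < INR K'.+1 by apply: lt_0_INR; apply/ltP.
have Yb : forall g : 'I_K'.+1,
   \big[Rplus/R0]_(T : {ffun 'I_K'.+1 -> 'I_K'.+1})
      xprob J (qprof N' K' T g) (pos N' K' g (T g)) (item N' K' g) <= NT / INR K'.+1.
  move=> g.
  have := @avg_lemma _ _ g ord0 (fun T c => xprob J (qprof N' K' T g) (pos N' K' g c) (item N' K' g)).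
  rewrite card_ord => H.
  have H' := H (fun T c c' => ltac:(by rewrite qprof_upd)) (fun T => sumY_le1 T g HJ h).
  apply: (Rmult_le_reg_l (INR K'.+1)) => //.
  have -> : INR K'.+1 * (NT / INR K'.+1) = NT by field; lra.
  exact: H'.
apply: (@rsum_exists_le _ _ _ [ffun _ => ord0]).
apply: (Rle_trans _ (\big[Rplus/R0]_(T : {ffun 'I_K'.+1 -> 'I_K'.+1})
   \big[Rplus/R0]_(g : 'I_K'.+1)
     (xprob J (qprof N' K' T g) (pos N' K' g (T g)) (item N' K' g) + eps' N' K'))).
  apply: rsum_le => T; apply: rsum_le => g; exact: truth_step.
under eq_bigr => T _ do rewrite rsum_split.
rewrite rsum_split exchange_big.
apply: (Rle_trans _ (\big[Rplus/R0]_(g : 'I_K'.+1) (NT / INR K'.+1) +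
     \big[Rplus/R0]_(T : {ffun 'I_K'.+1 -> 'I_K'.+1}) \big[Rplus/R0]_(g : 'I_K'.+1) eps' N' K')).
  apply: Rplus_le_compat_r; apply: rsum_le => g; exact: Yb.
rewrite (rsum_const (ordinal K'.+1) (NT / INR K'.+1)) (rsum_const (ordinal K'.+1) (eps' N' K')) (rsum_const _ (INR #|'I_K'.+1| * eps' N' K')) card_ord -/NT.
right; field; lra.
Qed.

Lemma agent_bound N' K' (J : mechanism N'.+1) T (i : 'I_N'.+1) :
  is_mechanism J -> HypK N' K' ->
  exp_util J (prof N' K' T) i (prof N' K' T i) <=
  2 / (INR N'.+1 + 1)
  + vv K' * \big[Rplus/R0]_(a : 'I_K'.+1) xprob J (prof N' K' T) i (item N' K' a)
  + / 2 * \big[Rplus/R0]_(g : 'I_K'.+1)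
        (if i == pos N' K' g (T g) then xprob J (prof N' K' T) i (item N' K' g) else 0).
Proof.
move=> HJ h.
have Hv := prof_valid T h.
have hv := vv_bounds K'.
have x0 : forall a, 0 <= xprob J (prof N' K' T) i a by move=> a; exact: xprob_ge0.
have S1 : 0 <= \big[Rplus/R0]_(a : 'I_K'.+1) xprob J (prof N' K' T) i (item N' K' a)
  by apply: rsum_ge0.
have S2 : 0 <= \big[Rplus/R0]_(g : 'I_K'.+1)
        (if i == pos N' K' g (T g) then xprob J (prof N' K' T) i (item N' K' g) else 0).
  by apply: rsum_ge0 => g; case: (_ == _) => //; lra.
case hi: (isg N' K' i).
- case hc: (ci N' K' i == T (gi N' K' i)).
  + have -> : prof N' K' T i = valf (item N' K' (gi N' K' i)) (/2) by rewrite /prof hi hc.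
    have := exp_util_le i (item N' K' (gi N' K' i)) HJ Hv (ltac:(lra) : 0 <= /2 <= 1).
    have : xprob J (prof N' K' T) i (item N' K' (gi N' K' i)) <=
       \big[Rplus/R0]_(g : 'I_K'.+1)
        (if i == pos N' K' g (T g) then xprob J (prof N' K' T) i (item N' K' g) else 0).
      have := @rsum_ge_term _ (gi N' K' i) (fun g => if i == pos N' K' g (T g)
           then xprob J (prof N' K' T) i (item N' K' g) else 0).
      rewrite /= -chosen_eq // hc; apply => g; case: (_ == _) => //; lra.
    have := vv_bounds K'.
    nra.
  + have -> : prof N' K' T i = valf (item N' K' (gi N' K' i)) (vv K') by rewrite /prof hi hc.
    have := exp_util_le i (item N' K' (gi N' K' i)) HJ Hv (ltac:(lra) : 0 <= vv K' <= 1).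
    move=> q2.
    have q1 : xprob J (prof N' K' T) i (item N' K' (gi N' K' i)) <=
      \big[Rplus/R0]_(a : 'I_K'.+1) xprob J (prof N' K' T) i (item N' K' a).
      by apply: (@rsum_ge_term _ (gi N' K' i) (fun a => xprob J (prof N' K' T) i (item N' K' a))).
    have : vv K' * xprob J (prof N' K' T) i (item N' K' (gi N' K' i)) <=
      vv K' * \big[Rplus/R0]_(a : 'I_K'.+1) xprob J (prof N' K' T) i (item N' K' a)
      by apply: Rmult_le_compat_l; lra.
    nra.
- have -> : prof N' K' T i = valf (ord0 : 'I_N'.+1) 0 by rewrite /prof hi.
  have := exp_util_le i ord0 HJ Hv (ltac:(lra) : 0 <= 0 <= 1).
  have : 0 <= vv K' * \big[Rplus/R0]_(a : 'I_K'.+1) xprob J (prof N' K' T) i (item N' K' a)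
    by apply: Rmult_le_pos; lra.
  nra.
Qed.

Lemma exp_sw_bound N' K' (J : mechanism N'.+1) T :
  is_mechanism J -> HypK N' K' ->
  exp_sw J (prof N' K' T) <=
  3 + / 2 * \big[Rplus/R0]_(g : 'I_K'.+1) xprob J (prof N' K' T) (pos N' K' g (T g)) (item N' K' g).
Proof.
move=> HJ h; rewrite exp_sw_eq.
apply: Rle_trans; first by apply: rsum_le => i; exact: agent_bound.
rewrite !rsum_split (rsum_const (ordinal N'.+1)).
rewrite (rsum_scal (ordinal N'.+1) (vv K')).
rewrite (rsum_scal (ordinal N'.+1) (/2)).
rewrite (exchange_big _ _ _ _ _ (fun i a => xprob J (prof N' K' T) i (item N' K' a))).
rewrite (exchange_big _ _ _ _ _ (fun i g => if i == pos N' K' g (T g) then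
   xprob J (prof N' K' T) i (item N' K' g) else 0)).
have E1 : \big[Rplus/R0]_(a : 'I_K'.+1) \big[Rplus/R0]_(i : 'I_N'.+1)
   xprob J (prof N' K' T) i (item N' K' a) = INR K'.+1.
  transitivity (\big[Rplus/R0]_(a : 'I_K'.+1) 1).
    apply: eq_bigr => a _; exact: sum_xprob_agents HJ (prof_valid T h).
  by rewrite rsum_const card_ord Rmult_1_r.
have E2 : \big[Rplus/R0]_(g : 'I_K'.+1) \big[Rplus/R0]_(i : 'I_N'.+1)
   (if i == pos N' K' g (T g) then xprob J (prof N' K' T) i (item N' K' g) else 0) =
   \big[Rplus/R0]_(g : 'I_K'.+1) xprob J (prof N' K' T) (pos N' K' g (T g)) (item N' K' g).
  apply: eq_bigr => g _; exact: rsum_pick.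
rewrite E1 E2 card_ord.
have hN : 0 <= INR N'.+1 by apply: pos_INR.
have c1 : INR N'.+1 * (2 / (INR N'.+1 + 1)) <= 2.
  have -> : INR N'.+1 * (2 / (INR N'.+1 + 1)) = 2 - 2 / (INR N'.+1 + 1) by field; lra.
  have : 0 < 2 / (INR N'.+1 + 1) by apply: Rdiv_lt_0_compat; lra.
  lra.
have c2 : vv K' * INR K'.+1 <= 1.
  rewrite /vv S_INR; have := pos_INR K'.+1 => q.
  have -> : / (INR K'.+1 + 1) * INR K'.+1 = 1 - / (INR K'.+1 + 1) by field; lra.
  have : 0 < / (INR K'.+1 + 1) by apply: Rinv_0_lt_compat; lra.
  lra.
lra.
Qed.

Definition finv (N' K' : nat) (T : {ffun 'I_K'.+1 -> 'I_K'.+1}) (i : 'I_N'.+1) : 'I_N'.+1 :=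
  if (i < K'.+1)%nat then pos N' K' (inord i) (T (inord i))
  else if isg N' K' i && (ci N' K' i == T (gi N' K' i)) then item N' K' (gi N' K' i) else i.
Arguments finv : clear implicits.

Lemma finvK N' K' (T : {ffun 'I_K'.+1 -> 'I_K'.+1}) : HypK N' K' -> involutive (finv N' K' T).
Proof.
move=> h i.
case hi: (i < K'.+1)%nat.
- have -> : finv N' K' T i = pos N' K' (inord i) (T (inord i)) by rewrite /finv hi.
  rewrite /finv.
  have pv := pos_val (inord i) (T (inord i)) h.
  have -> : (pos N' K' (inord i) (T (inord i)) < K'.+1)%nat = false.
    by rewrite pv; apply/negbTE; rewrite -leqNgt; lia.
  rewrite isg_pos // gi_pos // ci_pos // eqxx /=.
  by apply: val_inj; rewrite /= item_val // inordK.
- case hc: (isg N' K' i && (ci N' K' i == T (gi N' K' i))).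
  + have -> : finv N' K' T i = item N' K' (gi N' K' i) by rewrite /finv hi hc.
    move/andP: hc => [hg hc].
    rewrite /finv.
    have -> : (item N' K' (gi N' K' i) < K'.+1)%nat by rewrite item_val.
    have -> : (inord (item N' K' (gi N' K' i)) : 'I_K'.+1) = gi N' K' i.
      by apply: val_inj; rewrite /= item_val // inordK.
    by rewrite -(eqP hc) pos_gc.
  + have -> : finv N' K' T i = i by rewrite /finv hi hc.
    by rewrite /finv hi hc.
Qed.

Lemma finv_pos N' K' (T : {ffun 'I_K'.+1 -> 'I_K'.+1}) g : HypK N' K' ->
  finv N' K' T (pos N' K' g (T g)) = item N' K' g.
Proof.
move=> h; rewrite /finv pos_val //.
have -> : (K'.+1 + g * K'.+1 + T g < K'.+1)%nat = false by apply/negbTE; rewrite -leqNgt; lia.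
by rewrite isg_pos // gi_pos // ci_pos // eqxx.
Qed.

Lemma opt_lb N' K' (T : {ffun 'I_K'.+1 -> 'I_K'.+1}) : HypK N' K' -> INR K'.+1 / 2 <= opt_sw (prof N' K' T).
Proof.
move=> h.
pose mu0 : outcome N'.+1 := perm (inv_inj (finvK T h)).
apply: (Rle_trans _ _ _ _ (opt_ge _ mu0)).
rewrite /sw.
have Hv := prof_valid T h.
apply: (Rle_trans _ (\big[Rplus/R0]_(g : 'I_K'.+1)
   prof N' K' T (pos N' K' g (T g)) (mu0 (pos N' K' g (T g))))).
  apply: (Rle_trans _ (\big[Rplus/R0]_(g : 'I_K'.+1) (/2))).
    by rewrite rsum_const card_ord; right; field.
  apply: rsum_le => g.
  rewrite /mu0 permE finv_pos // /prof isg_pos // gi_pos // ci_pos // eqxx /Hg.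
  have := valf_ge (item N' K' g) (item N' K' g) (ltac:(lra) : 0 <= /2 <= 1).
  by rewrite eqxx.
apply: (@rsum_inj_le _ _ (fun g => pos N' K' g (T g)) (fun i => prof N' K' T i (mu0 i))).
- by move=> g1 g2 /(pos_inj h) [].
- by move=> i; have [_ [hp _]] := Hv i; apply: hp.
Qed.

Ltac fneq := repeat split; try (apply: Rgt_not_eq); lra.

Lemma main_bound N' K' (J : mechanism N'.+1) :
  is_mechanism J -> truthful J -> HypK N' K' ->
  exists p, valid_profile p /\ ratio J p <= 10 / INR K'.+1.
Proof.
move=> HJ HT h.
have [T HTb] := avg_X HJ HT h.
exists (prof N' K' T); split; first exact: prof_valid.
have hK : 1 <= INR K'.+1 by apply: (le_INR 1); apply/leP.
have hN := INR_N_ge h.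
have hNp : 0 <= INR N'.+1 by apply: pos_INR.
have Ke : INR K'.+1 * eps' N' K' <= 2.
  rewrite /eps' /vv -/(INR K'.+2) (S_INR K'.+1) /Rdiv Rinv_inv.
  have -> : INR K'.+1 * (2 * / (INR N'.+1 + 1) * (INR K'.+1 + 1)) =
     2 * (INR K'.+1 * (INR K'.+1 + 1)) / (INR N'.+1 + 1) by field; fneq.
  apply: (Rmult_le_reg_r (INR N'.+1 + 1)); first lra.
  have -> : 2 * (INR K'.+1 * (INR K'.+1 + 1)) / (INR N'.+1 + 1) * (INR N'.+1 + 1) =
     2 * (INR K'.+1 * (INR K'.+1 + 1)) by field; fneq.
  nra.
have Eb := exp_sw_bound T HJ h.
have Ob := opt_lb T h.
rewrite /ratio.
have hO : 0 < opt_sw (prof N' K' T) by lra.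
apply: (Rle_trans _ (5 / opt_sw (prof N' K' T))).
  apply: Rmult_le_compat_r; first (apply: Rlt_le; apply: Rinv_0_lt_compat; lra).
  lra.
apply: (Rle_trans _ (5 / (INR K'.+1 / 2))).
  apply: Rmult_le_compat_l; first lra.
  apply: Rinv_le_contravar; lra.
right; field; lra.
Qed.

Lemma small_bound N' (J : mechanism N'.+1) :
  is_mechanism J -> exists p, valid_profile p /\ ratio J p <= 1.
Proof.
move=> HJ.
have Hv : valid_profile (fun _ : 'I_N'.+1 => Fl N') by move=> i; exact: Fl_unit.
exists (fun _ => Fl N'); split => //.
have [_ [_ hs]] := Fl_unit N'.
have sw1 : forall mu, sw (fun _ : 'I_N'.+1 => Fl N') mu = 1.
  move=> mu; rewrite /sw -[RHS]hs.
  by rewrite [RHS](reindex_inj (@perm_inj _ mu)).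
have Eo : 1 <= opt_sw (fun _ : 'I_N'.+1 => Fl N') by rewrite -(sw1 1%g); apply: opt_ge.
have Ee : exp_sw J (fun _ : 'I_N'.+1 => Fl N') = 1.
  have [_ h1] := HJ _ Hv.
  rewrite /exp_sw -[RHS]h1; apply: eq_bigr => mu _; rewrite sw1; ring.
rewrite /ratio Ee.
have : 0 < opt_sw (fun _ : 'I_N'.+1 => Fl N') by lra.
move=> hp; apply: (Rmult_le_reg_r (opt_sw (fun _ : 'I_N'.+1 => Fl N'))) => //.
have -> : 1 / opt_sw (fun _ : 'I_N'.+1 => Fl N') * opt_sw (fun _ : 'I_N'.+1 => Fl N') = 1 by field; fneq.
lra.
Qed.

Lemma sqrt_lt_nat (N m : nat) : (N < m)%nat -> sqrt (INR N) < sqrt (INR m).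
Proof.
move=> h; apply: sqrt_lt_1_alt; split; first exact: pos_INR.
apply: lt_INR; apply/ltP; exact: h.
Qed.

Close Scope R_scope.
Theorem lemma9 :
  exists C : R, (0 < C)%R /\
    forall (n : nat), (1 <= n)%N ->
    forall J : mechanism n, is_mechanism J -> truthful J ->
    forall eps : R, (0 < eps)%R ->
      exists p : profile n, valid_profile p /\
        (ratio J p <= C / sqrt (INR n) + eps)%R.
Proof.
Open Scope R_scope.
exists 30; split; first lra.
case=> // N' _ J HJ HT eps heps.
have hsq : 0 < sqrt (INR N'.+1) by apply: sqrt_lt_R0; apply: lt_0_INR; apply/ltP.
have [hm1 hm2] := Nat.sqrt_spec N'.+1 (Nat.le_0_l _).
set m := Nat.sqrt N'.+1 in hm1 hm2.
have hlt : sqrt (INR N'.+1) < INR m.+1.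
  rewrite -(sqrt_square (INR m.+1)); last exact: pos_INR.
  rewrite -mult_INR; apply: sqrt_lt_nat; apply/ltP; exact: hm2.
case: (leqP m 1) => hm.
- have [p [Hp Hr]] := small_bound HJ.
  exists p; split => //.
  have : INR m.+1 <= 2 by apply: (le_INR _ 2); apply/leP.
  move=> q.
  have : 15 <= 30 / sqrt (INR N'.+1).
    apply: (Rmult_le_reg_r (sqrt (INR N'.+1))) => //.
    have -> : 30 / sqrt (INR N'.+1) * sqrt (INR N'.+1) = 30 by field; lra.
    lra.
  lra.
- have hK : HypK N' (m - 2)%nat.
    rewrite /HypK.
    have -> : (m - 2).+1 = (m - 1)%nat by lia.
    have : (m * m <= N'.+1)%nat by apply/leP.
    nia.
  have [p [Hp Hr]] := main_bound HJ HT hK.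
  exists p; split => //.
  have e : INR (m - 2).+1 + 2 = INR m.+1.
    rewrite -(plus_INR _ 2); congr INR; lia.
  have hK1 : 1 <= INR (m - 2).+1 by apply: (le_INR 1); apply/leP.
  have : 10 / INR (m - 2).+1 <= 30 / sqrt (INR N'.+1).
    apply: (Rmult_le_reg_r (INR (m - 2).+1 * sqrt (INR N'.+1))); first nra.
    have -> : 10 / INR (m - 2).+1 * (INR (m - 2).+1 * sqrt (INR N'.+1)) = 10 * sqrt (INR N'.+1)
      by field; lra.
    have -> : 30 / sqrt (INR N'.+1) * (INR (m - 2).+1 * sqrt (INR N'.+1)) = 30 * INR (m - 2).+1
      by field; lra.
    lra.
  lra.
Qed.
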